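(* Let $\alpha$ be a propositional variable. There is no formula $\theta$ built from propositional variables and $\bot$ using only $\land,\lor,\rightarrow,\nabla$ (in particular not containing $\Delta$) such that for every nIML1-F1-model and every world $w$ of it, $w\Vdash\Delta\alpha$ iff $w\Vdash\theta$. That is, $\Delta$ is not definable in terms of the other connectives.
   Context: Formulas are built from a denumerable set $PV$ of propositional variables and $\bot$ using binary $\land,\lor,\rightarrow$ and unary $\Delta,\nabla$. An nIML1-model is a triple $\langle W,\mathcal{N},V\rangle$ with $W\neq\emptyset$, $\mathcal{N}:W\to P(P(W))$ satisfying for all $w$: (a) $w\in\bigcap\mathcal{N}_w$; (b) $\bigcap\mathcal{N}_w\in\mathcal{N}_w$; (c) $u\in\bigcap\mathcal{N}_w\Rightarrow\bigcap\mathcal{N}_u\subseteq\bigcap\mathcal{N}_w$; (d) $\bigcap\mathcal{N}_w\subseteq X\subseteq\bigcup\mathcal{N}_w\Rightarrow X\in\mathcal{N}_w$; (e) $u\in\bigcap\mathcal{N}_w\Rightarrow\bigcup\mathcal{N}_u\subseteq\bigcup\mathcal{N}_w$ ($\bigcap\mathcal{N}_w$, $\bigcup\mathcal{N}_w$ the intersection and union of the family $\mathcal{N}_w$), and $V:PV\to P(W)$ with $w\in V(q)\Rightarrow\bigcap\mathcal{N}_w\subseteq V(q)$. It is an nIML1-F1-model if moreover: whenever $u\in\bigcap\mathcal{N}_w$ and $v\in\bigcup\mathcal{N}_w$, there is $z$ with $z\in\bigcup\mathcal{N}_u\cap\bigcap\mathcal{N}_v$. Forcing: atoms via $V$; $\bot$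 never; $\land,\lor$ pointwise; $w\Vdash\varphi\rightarrow\psi$ iff every $v\in\bigcap\mathcal{N}_w$ has $v\nVdash\varphi$ or $v\Vdash\psi$; $w\Vdash\Delta\varphi$ iff every $v\in\bigcup\mathcal{N}_w$ has $v\Vdash\varphi$; $w\Vdash\nabla\varphi$ iff some $v\in\bigcup\mathcal{N}_w$ has $v\Vdash\varphi$. *)

(* Defs.v *)
Inductive form : Type :=
| Var : nat -> form
| Bot : form
| And : form -> form -> form
| Or : form -> form -> form
| Imp : form -> form -> form
| Delta : form -> form
| Nabla : form -> form.

Fixpoint delta_free (f : form) : Prop :=
  match f with
  | Var _ | Bot => True
  | And a b | Or a b | Imp a b => delta_free a /\ delta_free b
  | Delta _ => False
  | Nabla a => delta_free a
  end.

Definition bigcap {W : Type} (N : (W -> Prop) -> Prop) : W -> Prop :=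
  fun x => forall X, N X -> X x.
Definition bigcup {W : Type} (N : (W -> Prop) -> Prop) : W -> Prop :=
  fun x => exists X, N X /\ X x.
Definition subset {W : Type} (A B : W -> Prop) : Prop := forall x, A x -> B x.

(* N is extensional in its argument sets: sets are identified with predicates,
   so we require membership to respect extensional equality of sets. *)
Record nIML1_model : Type := {
  world : Type;
  world_inhabited : inhabited world;
  nbhd : world -> (world -> Prop) -> Prop;
  val : nat -> world -> Prop;
  nbhd_ext : forall w X Y, (forall x, X x <-> Y x) -> nbhd w X -> nbhd w Y;
  cond_a : forall w, bigcap (nbhd w) w;
  cond_b : forall w, nbhd w (bigcap (nbhd w));
  cond_c : forall w u, bigcap (nbhd w) u ->
             subset (bigcap (nbhd u)) (bigcap (nbhd w));
  cond_d : forall w X, subset (bigcap (nbhd w)) X -> subset X (bigcup (nbhd w)) ->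
             nbhd w X;
  cond_e : forall w u, bigcap (nbhd w) u ->
             subset (bigcup (nbhd u)) (bigcup (nbhd w));
  val_pers : forall q w, val q w -> subset (bigcap (nbhd w)) (val q)
}.

Definition F1 (M : nIML1_model) : Prop :=
  forall w u v, bigcap (nbhd M w) u -> bigcup (nbhd M w) v ->
    exists z, bigcup (nbhd M u) z /\ bigcap (nbhd M v) z.

Fixpoint forces (M : nIML1_model) (w : world M) (f : form) : Prop :=
  match f with
  | Var q => val M q w
  | Bot => False
  | And a b => forces M w a /\ forces M w b
  | Or a b => forces M w a \/ forces M w b
  | Imp a b => forall v, bigcap (nbhd M w) v -> ~ forces M v a \/ forces M v b
  | Delta a => forall v, bigcup (nbhd M w) v -> forces M v a
  | Nabla a => exists v, bigcup (nbhd M w) v /\ forces M v a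
  end.

(* Main.v *)
Require Import Defs.

Definition CB (w : bool) : bool -> Prop := fun x => if w then x = true else True.
Definition NB (w : bool) (X : bool -> Prop) : Prop := subset (CB w) X.

Lemma capB w x : bigcap (NB w) x <-> CB w x.
Proof. split. intro H. apply H. intros y; auto. intros H X HX. apply HX, H. Qed.
Lemma cupB w x : bigcup (NB w) x.
Proof. exists (fun _ => True). split; [intros y _; exact I| exact I]. Qed.

Definition MB : nIML1_model.
Proof.
refine {| world := bool; nbhd := NB; val := fun _ x => x = true |}.
- exact (inhabits true).
- intros w X Y H HX y Hy. apply H, HX, Hy.
- intros w. apply capB. destruct w; simpl; auto.
- intros w y Hy. apply capB, Hy.
- intros w u Hu x Hx. apply capB in Hu. apply capB in Hx. apply capB.
  destruct w; simpl in *; auto. subst u. exact Hx.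
- intros w X H _ y Hy. apply H, (proj2 (capB w y)), Hy.
- intros w u _ x _. apply (cupB w x).
- intros q w Hw x Hx. subst w. apply capB in Hx. exact Hx.
Defined.

Lemma F1B : F1 MB.
Proof. intros w u v _ _. exists true. split. apply cupB. apply capB. destruct v; simpl; auto. Qed.

Definition NA (w : unit) (X : unit -> Prop) : Prop := forall x, X x.

Definition MA : nIML1_model.
Proof.
refine {| world := unit; nbhd := NA; val := fun _ _ => True |}.
- exact (inhabits tt).
- intros w X Y H HX y. apply H, HX.
- intros w X HX. apply HX.
- intros w y X HX. apply HX.
- intros w u _ x _ X HX. apply HX.
- intros w X H _ y. apply H. intros X' HX'. apply HX'.
- intros w u _ x _. exists (fun _ => True). split; [intros ?; exact I|exact I].
- intros; intros x _; exact I.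
Defined.

Lemma F1A : F1 MA.
Proof. intros w u v _ _. exists tt. split.
- exists (fun _ => True). split; [intros ?; exact I|exact I].
- intros X HX. apply HX.
Qed.

Lemma capA x : bigcap (nbhd MA tt) x.
Proof. intros X HX. apply HX. Qed.
Lemma cupA x : bigcup (nbhd MA tt) x.
Proof. exists (fun _ => True). split; [intros ?; exact I|exact I]. Qed.

Lemma key (phi : form) : delta_free phi ->
  (forces MB true phi <-> forces MA tt phi) /\ (forces MB false phi -> forces MB true phi).
Proof.
induction phi; simpl; intros D.
- split. split; auto. intros H; discriminate.
- tauto.
- destruct D as [D1 D2]; specialize (IHphi1 D1); specialize (IHphi2 D2); tauto.
- destruct D as [D1 D2]; specialize (IHphi1 D1); specialize (IHphi2 D2); tauto.
- destruct D as [D1 D2]; specialize (IHphi1 D1); specialize (IHphi2 D2).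
  destruct IHphi1 as [E1 P1], IHphi2 as [E2 P2].
  assert (Ht : bigcap (nbhd MB true) true) by (apply capB; reflexivity).
  split; [split|].
  + intros H [] _. destruct (H true Ht); [left; tauto|right; tauto].
  + intros H v Hv. apply capB in Hv. simpl in Hv. subst v.
    destruct (H tt (capA tt)); [left; tauto|right; tauto].
  + intros H v Hv. apply capB in Hv. simpl in Hv. subst v. apply H.
    apply capB. exact I.
- destruct D.
- specialize (IHphi D). destruct IHphi as [E P]. split; [split|].
  + intros [v [_ Hv]]. exists tt. split. apply cupA. destruct v. tauto. apply E, P, Hv.
  + intros [[] [_ Hv]]. exists true. split. apply cupB. tauto.
  + intros [v [_ Hv]]. exists v. split. apply cupB. exact Hv.
Qed.

Theorem lemma9p3 (alpha : nat) :
  ~ exists theta : form,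
      delta_free theta /\
      forall (M : nIML1_model), F1 M ->
        forall w : world M, forces M w (Delta (Var alpha)) <-> forces M w theta.
Proof.
  intros [theta [D H]].
  assert (HA : forces MA tt (Delta (Var alpha))) by (intros v _; exact I).
  apply (H MA F1A tt) in HA.
  apply (key theta D) in HA.
  apply (H MB F1B true) in HA.
  specialize (HA false (cupB true false)). discriminate.
Qed.
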